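(* Let $\pi_1,\dots,\pi_K\ge0$ with $\sum_k\pi_k=1$, $g_1,\dots,g_K$ probability densities on $\mathbb{R}^d$, $f=\sum_k\pi_kg_k$, and $x_1,\dots,x_N\in\mathbb{R}^d$ with $0<f(x_n)<\infty$ for all $n$. Let $L\ge1$ and let $Q^{(l)}_k\ge0$ ($k=1,\dots,K$, $l=1,\dots,L$) satisfy $\sum_{l=1}^LQ^{(l)}_k=1$ for every $k$. Define $$\rho_l=\sum_{k=1}^KQ^{(l)}_k\pi_k,\qquad \phi^{(l)}_k=\frac{Q^{(l)}_k\pi_k}{\rho_l},\qquad h_l=\sum_{k=1}^K\phi^{(l)}_kg_k,$$ and assume $\rho_l>0$ and $h_l(x_n)>0$ for all $l,n$ (so $f=\sum_l\rho_lh_l$). Let $$w^{(l)}_n=\frac{\rho_lh_l(x_n)}{f(x_n)},\qquad W_l=\frac1N\sum_{n=1}^Nw^{(l)}_n.$$ Then $$\mathrm{MC}(\{\pi_k,g_k\}_{k=1}^K;\{x_n\}_{n=1}^N)=\mathrm{MC}(\{\rho_l,h_l\}_{l=1}^L;\{x_n\}_{n=1}^N)+\sum_{l=1}^LW_l\cdot\mathrm{MC}(\{\phi^{(l)}_k,g_k\}_{k=1}^K;\{x_n,w^{(l)}_n\}_{n=1}^N).$$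
   Context: For mixture weights $\pi_k\ge 0$ summing to one, densities $g_k$, $f=\sum_k \pi_k g_k$, and data $x_1,\dots,x_N$ with $0<f(x_n)<\infty$ for all $n$, the mixture complexity is $$\mathrm{MC}(\{\pi_k,g_k\}_{k=1}^K;\{x_n\}_{n=1}^N)=\frac1N\sum_{n=1}^N\sum_{k=1}^K\frac{\pi_k g_k(x_n)}{f(x_n)}\log\frac{g_k(x_n)}{f(x_n)},$$ and, for nonnegative data weights $w_1,\dots,w_N$ with $\sum_n w_n>0$, the weighted mixture complexity is $$\mathrm{MC}(\{\pi_k,g_k\}_{k=1}^K;\{x_n,w_n\}_{n=1}^N)=\frac{1}{\sum_{n'=1}^Nw_{n'}}\sum_{n=1}^Nw_n\sum_{k=1}^K\frac{\pi_k g_k(x_n)}{f(x_n)}\log\frac{g_k(x_n)}{f(x_n)},$$ in both cases with the convention that a term with $\pi_k g_k(x_n)=0$ equals $0$. *)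

(* Defs.v *)
From mathcomp Require Import all_boot all_order all_algebra.
From mathcomp Require Import all_classical all_reals exp.
Set Implicit Arguments. Unset Strict Implicit. Unset Printing Implicit Defensive.
Import Order.TTheory GRing.Theory Num.Theory.
Local Open Scope ring_scope.

Definition mixf {R : realType} {T : Type} (K : nat)
  (pi : 'I_K -> R) (g : 'I_K -> T -> R) (x : T) : R :=
  \sum_(k < K) pi k * g k x.

Definition mc_term {R : realType} {T : Type} (K : nat)
  (pi : 'I_K -> R) (g : 'I_K -> T -> R) (x : T) : R :=
  \sum_(k < K)
    (if pi k * g k x == 0 then 0
     else pi k * g k x / mixf pi g x * ln (g k x / mixf pi g x)).

Definition MC {R : realType} {T : Type} (K N : nat)
  (pi : 'I_K -> R) (g : 'I_K -> T -> R) (xs : 'I_N -> T) : R :=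
  (N%:R)^-1 * \sum_(n < N) mc_term pi g (xs n).

Definition wMC {R : realType} {T : Type} (K N : nat)
  (pi : 'I_K -> R) (g : 'I_K -> T -> R) (xs : 'I_N -> T) (w : 'I_N -> R) : R :=
  (\sum_(n < N) w n)^-1 * \sum_(n < N) w n * mc_term pi g (xs n).

(* Main.v *)
Require Import Defs.
From mathcomp Require Import all_boot all_order all_algebra.
From mathcomp Require Import all_classical all_reals exp.
From mathcomp Require Import ring lra.
Import Order.TTheory GRing.Theory Num.Theory.
Local Open Scope ring_scope.

Theorem theorem1 (R : realType) (d K N L : nat)
  (pi : 'I_K -> R) (g : 'I_K -> 'rV[R]_d -> R) (xs : 'I_N -> 'rV[R]_d)
  (Q : 'I_L -> 'I_K -> R)
  (hpi0 : forall k, 0 <= pi k)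
  (hpi1 : \sum_(k < K) pi k = 1)
  (hg0 : forall k y, 0 <= g k y)
  (hN : (0 < N)%N)
  (hf : forall n, 0 < mixf pi g (xs n))
  (hL : (0 < L)%N)
  (hQ0 : forall l k, 0 <= Q l k)
  (hQ1 : forall k, \sum_(l < L) Q l k = 1) :
  let rho := fun l : 'I_L => \sum_(k < K) Q l k * pi k in
  let phi := fun (l : 'I_L) (k : 'I_K) => Q l k * pi k / rho l in
  let h := fun (l : 'I_L) (y : 'rV[R]_d) => \sum_(k < K) phi l k * g k y in
  let w := fun (l : 'I_L) (n : 'I_N) =>
             rho l * h l (xs n) / mixf pi g (xs n) in
  let W := fun l : 'I_L => (N%:R)^-1 * \sum_(n < N) w l n in
  (forall l, 0 < rho l) ->
  (forall l n, 0 < h l (xs n)) ->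
  MC pi g xs
  = MC rho h xs + \sum_(l < L) W l * wMC (phi l) g xs (w l).
Proof.
move=> rho phi h w W Hrho Hh.
have Hfr : forall n, mixf rho h (xs n) = mixf pi g (xs n).
  move=> n; rewrite /mixf /h /phi.
  under eq_bigr => l _ do rewrite big_distrr /=.
  rewrite exchange_big /=; apply: eq_bigr => k _.
  transitivity (\sum_(l < L) Q l k * (pi k * g k (xs n))).
    apply: eq_bigr => l _; have := Hrho l; rewrite -/(rho l) => hr.
    by field; rewrite gt_eqF.
  by rewrite -big_distrl /= hQ1 mul1r.
pose T := fun (n : 'I_N) (l : 'I_L) (k : 'I_K) (z : R) =>
  if Q l k * (pi k * g k (xs n)) == 0 then 0
  else Q l k * (pi k * g k (xs n)) / mixf pi g (xs n) * z.
have E1 : forall n, mc_term pi g (xs n) =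
   \sum_(l < L) \sum_(k < K) T n l k (ln (g k (xs n) / mixf pi g (xs n))).
  move=> n; rewrite /mc_term exchange_big /=; apply: eq_bigr => k _.
  rewrite /T; case: eqP => [->|Ha].
    by rewrite big1 // => l _; rewrite mulr0 eqxx.
  transitivity (\sum_(l < L) Q l k * (pi k * g k (xs n) / mixf pi g (xs n) *
     ln (g k (xs n) / mixf pi g (xs n)))).
    by rewrite -big_distrl /= hQ1 mul1r.
  apply: eq_bigr => l _; case: eqP => [/eqP|_]; last by rewrite !mulrA.
  by rewrite mulf_eq0 => /orP[/eqP->|/eqP//]; rewrite mul0r.
have E2 : forall n, mc_term rho h (xs n) =
   \sum_(l < L) \sum_(k < K) T n l k (ln (h l (xs n) / mixf pi g (xs n))).
  move=> n; rewrite /mc_term; apply: eq_bigr => l _.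
  have Hb : rho l * h l (xs n) != 0 by rewrite mulf_neq0 // gt_eqF.
  rewrite (negbTE Hb) Hfr.
  have -> : rho l * h l (xs n) = \sum_(k < K) Q l k * (pi k * g k (xs n)).
    rewrite /h big_distrr /=; apply: eq_bigr => k _; rewrite /phi.
    by field; rewrite gt_eqF.
  rewrite !big_distrl /=; apply: eq_bigr => k _; rewrite /T.
  by case: eqP => [->|_]; rewrite ?mul0r.
have E3 : forall n l, w l n * mc_term (phi l) g (xs n) =
   \sum_(k < K) T n l k (ln (g k (xs n) / h l (xs n))).
  move=> n l; rewrite /mc_term big_distrr /=; apply: eq_bigr => k _.
  have -> : mixf (phi l) g (xs n) = h l (xs n) by [].
  have hr := Hrho l; have hh := Hh l n; have hf' := hf n.
  have Eq : phi l k * g k (xs n) = Q l k * (pi k * g k (xs n)) / rho l.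
    by rewrite /phi; field; rewrite gt_eqF.
  rewrite /T Eq mulf_eq0 invr_eq0 (gt_eqF hr) orbF.
  case: eqP => _; first by rewrite mulr0.
  rewrite /w; field; rewrite !gt_eqF //.
have E : forall n, mc_term pi g (xs n) = mc_term rho h (xs n) +
    \sum_(l < L) w l n * mc_term (phi l) g (xs n).
  move=> n; rewrite E1 E2 -big_split /=; apply: eq_bigr => l _.
  rewrite E3 -big_split /=; apply: eq_bigr => k _; rewrite /T.
  case: eqP => [_|]; first by rewrite addr0.
  move/eqP; rewrite !mulf_eq0 !negb_or => /andP[_ /andP[_ Hg]].
  have Hg' : 0 < g k (xs n) by rewrite lt_def Hg hg0.
  have hh := Hh l n; have hf' := hf n.
  rewrite -mulrDr -lnM ?posrE ?divr_gt0 //.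
  congr (_ * ln _); field; rewrite !gt_eqF //.
rewrite /MC (eq_bigr _ (fun n _ => E n)) big_split /= mulrDr; congr (_ + _).
rewrite exchange_big big_distrr /=; apply: eq_bigr => l _.
rewrite /W /wMC mulrA -(mulrA _ _ (_^-1)) mulfV ?mulr1 ?big_distrr //.
have Hw : forall n, 0 < w l n.
  move=> n; rewrite /w; apply: divr_gt0; last exact: hf.
  exact: mulr_gt0.
have Hs : 0 < \sum_(n < N) w l n.
  rewrite (bigD1 (Ordinal hN)) //; apply: ltr_pwDl; first exact: Hw.
  by apply: sumr_ge0 => i _; apply: ltW.
exact: (lt0r_neq0 Hs).
Qed.
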